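(* Let $G$ be a finitely generated group with $\operatorname{Out}(G)$ finite. Then the automorphic growth function of $G$ is equivalent (under $\sim$) to its conjugacy growth function.
   Context: With respect to a finite generating set, the automorphic growth function sends $n$ to the number of $\operatorname{Aut}(G)$-orbits of $G$ containing an element of word length at most $n$, and the conjugacy growth function sends $n$ to the number of conjugacy classes containing an element of word length at most $n$. For non-decreasing non-zero $f,g\colon\mathbb{N}\to\mathbb{N}$, $f\preccurlyeq g$ means there is $\lambda\in\mathbb{N}\setminus\{0\}$ with $f(n)\le\lambda g(\lambda n+\lambda)+\lambda$ for all $n$, and $f\sim g$ means $f\preccurlyeq g$ and $g\preccurlyeq f$. *)

(* Defs.v *)
From Stdlib Require Import List Arith ClassicalEpsilon.
Import ListNotations.

Record Group := {
  carrier :> Type;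
  gmul : carrier -> carrier -> carrier;
  ginv : carrier -> carrier;
  gone : carrier;
  gmulA : forall x y z, gmul x (gmul y z) = gmul (gmul x y) z;
  gmul1l : forall x, gmul gone x = x;
  gmul1r : forall x, gmul x gone = x;
  gmulVl : forall x, gmul (ginv x) x = gone;
  gmulVr : forall x, gmul x (ginv x) = gone
}.

Arguments gmul {G} : rename.
Arguments ginv {G} : rename.
Arguments gone {G} : rename.

Section Defs.
Variable G : Group.

Definition eval_word (w : list G) : G := fold_right gmul gone w.

Definition alphabet (S : list G) : list G := S ++ map ginv S.

Fixpoint words_upto (A : list G) (n : nat) : list (list G) :=
  match n with
  | 0 => [nil]
  | S m => nil :: flat_map (fun a => map (cons a) (words_upto A m)) A
  end.

Definition generates (S : list G) : Prop :=
  forall x : G, exists w : list G,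
    (forall a, In a w -> In a (alphabet S)) /\ eval_word w = x.

Definition finitely_generated : Prop := exists S : list G, generates S.

(* elements of word length at most n w.r.t. S (with repetitions) *)
Definition ball (S : list G) (n : nat) : list G :=
  map eval_word (words_upto (alphabet S) n).

Definition is_hom (f : G -> G) : Prop := forall x y, f (gmul x y) = gmul (f x) (f y).
Definition is_aut (f : G -> G) : Prop :=
  is_hom f /\ (forall x y, f x = f y -> x = y) /\ (forall y, exists x, f x = y).

Definition conj_by (g x : G) : G := gmul (gmul g x) (ginv g).

(* Out(G) = Aut(G)/Inn(G) is finite: Aut(G) is a finite union of cosets
   phi ∘ Inn(G) *)
Definition Out_finite : Prop :=
  exists l : list (G -> G), (forall phi, In phi l -> is_aut phi) /\
    forall a, is_aut a -> exists phi, In phi l /\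
      exists g : G, forall x, a x = phi (conj_by g x).

Definition aut_equiv (x y : G) : Prop := exists a, is_aut a /\ a x = y.
Definition conjugate (x y : G) : Prop := exists g, conj_by g x = y.

(* number of R-classes meeting a list (R assumed an equivalence relation) *)
Fixpoint count_classes (R : G -> G -> Prop) (s : list G) : nat :=
  match s with
  | nil => 0
  | x :: s' =>
    if excluded_middle_informative (exists y, In y s' /\ R x y)
    then count_classes R s' else S (count_classes R s')
  end.

Definition automorphic_growth (S : list G) (n : nat) : nat :=
  count_classes aut_equiv (ball S n).
Definition conjugacy_growth (S : list G) (n : nat) : nat :=
  count_classes conjugate (ball S n).
End Defs.

Definition growth_le (f g : nat -> nat) : Prop :=
  exists lam : nat, 0 < lam /\ forall n, f n <= lam * g (lam * n + lam) + lam.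
Definition growth_equiv (f g : nat -> nat) : Prop := growth_le f g /\ growth_le g f.

(* Main.v *)
Require Import Defs.
From Stdlib Require Import List Arith Lia ClassicalEpsilon.
Import ListNotations.

Arguments gmulA {_}.
Arguments gmul1l {_}.
Arguments gmul1r {_}.
Arguments gmulVl {_}.
Arguments gmulVr {_}.

Section Aux.
Variable G : Group.

Ltac assoc := repeat rewrite gmulA.

Lemma inv_uniq (a b : G) : gmul a b = gone -> b = ginv a.
Proof. intro H. rewrite <- (gmul1l b). rewrite <- (gmulVl a).
  rewrite <- gmulA, H, gmul1r. reflexivity. Qed.

Lemma inv_mul (g h : G) : ginv (gmul g h) = gmul (ginv h) (ginv g).
Proof. symmetry; apply inv_uniq.
  rewrite <- gmulA, (gmulA h), gmulVr, gmul1l, gmulVr. reflexivity. Qed.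

Lemma inv_one : ginv (@gone G) = gone.
Proof. symmetry; apply inv_uniq; apply gmul1l. Qed.

Lemma conj_comp (g h x : G) : conj_by G g (conj_by G h x) = conj_by G (gmul g h) x.
Proof. unfold conj_by. rewrite inv_mul. assoc. reflexivity. Qed.

Lemma conj_one (x : G) : conj_by G gone x = x.
Proof. unfold conj_by. rewrite inv_one, gmul1l, gmul1r. reflexivity. Qed.

Lemma conj_inv (g x : G) : conj_by G (ginv g) (conj_by G g x) = x.
Proof. rewrite conj_comp, gmulVl, conj_one. reflexivity. Qed.

Lemma conj_inv' (g x : G) : conj_by G g (conj_by G (ginv g) x) = x.
Proof. rewrite conj_comp, gmulVr, conj_one. reflexivity. Qed.

Lemma cancelVl (a b : G) : gmul (gmul a (ginv b)) b = a.
Proof. rewrite <- gmulA, gmulVl, gmul1r. reflexivity. Qed.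

Lemma conj_aut (g : G) : is_aut G (conj_by G g).
Proof.
  split; [|split].
  - intros x y. unfold conj_by. assoc. rewrite cancelVl. reflexivity.
  - intros x y H. rewrite <- (conj_inv g x), <- (conj_inv g y), H. reflexivity.
  - intros y. exists (conj_by G (ginv g) y). apply conj_inv'.
Qed.

Lemma idem_one (e : G) : gmul e e = e -> e = gone.
Proof. intro H. transitivity (gmul (ginv e) (gmul e e)).
  - rewrite gmulA, gmulVl, gmul1l. reflexivity.
  - rewrite H. apply gmulVl. Qed.

Lemma hom_one (phi : G -> G) : is_hom G phi -> phi gone = gone.
Proof. intro Hh. apply idem_one. rewrite <- Hh, gmul1l. reflexivity. Qed.

Lemma hom_inv (phi : G -> G) h : is_hom G phi -> phi (ginv h) = ginv (phi h).
Proof. intro Hh. apply inv_uniq. rewrite <- Hh, gmulVr. apply hom_one; auto. Qed.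

Lemma hom_conj (phi : G -> G) h r : is_hom G phi ->
  phi (conj_by G h r) = conj_by G (phi h) (phi r).
Proof. intro Hh. unfold conj_by. rewrite !Hh, hom_inv; auto. Qed.

Lemma aut_inv (f : G -> G) : is_aut G f ->
  exists g, is_aut G g /\ forall x, g (f x) = x.
Proof.
  intros [Hh [Hi Hs]].
  set (g := fun y => proj1_sig (constructive_indefinite_description _ (Hs y))).
  assert (Hg : forall y, f (g y) = y).
  { intro y. unfold g. destruct (constructive_indefinite_description _ (Hs y)); auto. }
  assert (Hgf : forall x, g (f x) = x) by (intro x; apply Hi; rewrite Hg; auto).
  exists g. split; [split; [|split]|]; auto.
  - intros x y. apply Hi. rewrite Hh, !Hg. reflexivity.
  - intros x y H. rewrite <- (Hg x), <- (Hg y), H. reflexivity.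
  - intros y. exists (f y). auto.
Qed.

Lemma aut_refl x : aut_equiv G x x.
Proof. exists (conj_by G gone). split; [apply conj_aut| apply conj_one]. Qed.

Lemma aut_sym x y : aut_equiv G x y -> aut_equiv G y x.
Proof. intros [a [Ha Hax]]. destruct (aut_inv a Ha) as [g [Hg Hga]].
  exists g. split; auto. rewrite <- Hax. auto. Qed.

Lemma aut_trans x y z : aut_equiv G x y -> aut_equiv G y z -> aut_equiv G x z.
Proof. intros [a [[Ha1 [Ha2 Ha3]] Hax]] [b [[Hb1 [Hb2 Hb3]] Hby]].
  exists (fun t => b (a t)). split.
  - split; [|split].
    + intros u v. rewrite Ha1, Hb1. reflexivity.
    + intros u v H. apply Ha2, Hb2, H.
    + intros w. destruct (Hb3 w) as [u Hu]. destruct (Ha3 u) as [v Hv].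
      exists v. rewrite Hv; auto.
  - rewrite Hax; auto.
Qed.

Lemma conj_refl x : conjugate G x x.
Proof. exists gone. apply conj_one. Qed.

Lemma conj_sym x y : conjugate G x y -> conjugate G y x.
Proof. intros [g Hg]. exists (ginv g). rewrite <- Hg. apply conj_inv. Qed.

Lemma conj_trans x y z : conjugate G x y -> conjugate G y z -> conjugate G x z.
Proof. intros [g Hg] [h Hh]. exists (gmul h g). rewrite <- conj_comp, Hg; auto. Qed.

Lemma words_mono A n w : In w (words_upto G A n) -> In w (words_upto G A (S n)).
Proof.
  revert w. induction n as [|m IH]; intros w Hw.
  - simpl in Hw. destruct Hw as [<-|[]]. simpl; auto.
  - simpl in Hw. destruct Hw as [<-|Hw]; [simpl; auto|].
    apply in_flat_map in Hw as [a [Ha Hw]].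
    apply in_map_iff in Hw as [w' [<- Hw']].
    remember (S m) as k. simpl. right. apply in_flat_map. exists a. split; auto.
    apply in_map. subst k. apply IH; auto.
Qed.

Lemma ball_mono S n m x : n <= m -> In x (ball G S n) -> In x (ball G S m).
Proof.
  intros Hle. induction Hle; auto.
  intros Hx. apply IHHle in Hx. unfold ball in *.
  apply in_map_iff in Hx as [w [<- Hw]]. apply in_map. apply words_mono; auto.
Qed.

Section Count.
Variable R : G -> G -> Prop.
Hypothesis Rrefl : forall x, R x x.
Hypothesis Rsym : forall x y, R x y -> R y x.
Hypothesis Rtrans : forall x y z, R x y -> R y z -> R x z.

Fixpoint reps (s : list G) : list G :=
  match s with
  | nil => nil
  | x :: s' =>
    if excluded_middle_informative (exists y, In y s' /\ R x y)
    then reps s' else x :: reps s'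
  end.

Lemma reps_len s : length (reps s) = count_classes G R s.
Proof. induction s as [|a s IH]; simpl; auto.
  destruct (excluded_middle_informative _); simpl; auto. Qed.

Lemma reps_cover s : forall x, In x s -> exists r, In r (reps s) /\ R x r.
Proof.
  induction s as [|a s IH]; simpl; [intros ? []|].
  intros x [<-|Hx]; destruct (excluded_middle_informative _) as [He|Hn].
  - destruct He as [y [Hy Ry]]. destruct (IH _ Hy) as [r [Hr Rr]].
    exists r. split; eauto.
  - exists a. simpl; auto.
  - auto.
  - destruct (IH _ Hx) as [r [Hr Rr]]. exists r. simpl; auto.
Qed.

Lemma cover_bound s : forall c, (forall x, In x s -> exists y, In y c /\ R x y) ->
  count_classes G R s <= length c.
Proof.
  induction s as [|a s IH]; intros c Hc; simpl; [lia|].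
  destruct (excluded_middle_informative _) as [He|Hn].
  - apply IH. intros x Hx. apply Hc. simpl; auto.
  - destruct (Hc a (or_introl eq_refl)) as [z [Hz Raz]].
    apply in_split in Hz as [c1 [c2 ->]].
    assert (count_classes G R s <= length (c1 ++ c2)).
    { apply IH. intros x Hx. destruct (Hc x (or_intror Hx)) as [y [Hy Rxy]].
      apply in_app_iff in Hy as [Hy|[<-|Hy]].
      - exists y. split; auto. apply in_app_iff; auto.
      - exfalso. apply Hn. exists x. split; auto. eauto.
      - exists y. split; auto. apply in_app_iff; auto. }
    rewrite length_app in *. simpl. lia.
Qed.

Lemma count_mono S n m : n <= m ->
  count_classes G R (ball G S n) <= count_classes G R (ball G S m).
Proof.
  intro Hle. rewrite <- (reps_len (ball G S m)). apply cover_bound.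
  intros x Hx. apply reps_cover. eapply ball_mono; eauto.
Qed.
End Count.

Lemma len_fm (l : list (G -> G)) (s : list G) :
  length (flat_map (fun r => map (fun phi => phi r) l) s) = length s * length l.
Proof. induction s; simpl; auto. rewrite length_app, length_map, IHs. lia. Qed.

End Aux.


Theorem mainTheorem17 (G : Group) :
  finitely_generated G -> Out_finite G ->
  forall S : list G, generates G S ->
  growth_equiv (automorphic_growth G S) (conjugacy_growth G S).
Proof.
  intros _ [l [Hl Hcov]] T _.
  assert (Hac : forall n, automorphic_growth G T n <= conjugacy_growth G T n).
  { intro n. unfold automorphic_growth, conjugacy_growth.
    rewrite <- (reps_len G (conjugate G)). apply (cover_bound G (aut_equiv G) (@aut_sym G) (@aut_trans G)).
    - intros x Hx. destruct (reps_cover G (conjugate G) (@conj_refl G) (@conj_sym G) (@conj_trans G) _ _ Hx)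
        as [r [Hr [g Hg]]]. exists r. split; auto.
      exists (conj_by G g). split; auto. apply conj_aut. }
  assert (Hca : forall n, conjugacy_growth G T n <= automorphic_growth G T n * length l).
  { intro n. unfold automorphic_growth, conjugacy_growth.
    rewrite <- (reps_len G (aut_equiv G)), <- len_fm. apply (cover_bound G (conjugate G) (@conj_sym G) (@conj_trans G)).
    - intros x Hx. destruct (reps_cover G (aut_equiv G) (@aut_refl G) (@aut_sym G) (@aut_trans G) _ _ Hx)
        as [r [Hr Hxr]].
      apply aut_sym in Hxr. destruct Hxr as [a [Ha Har]].
      destruct (Hcov a Ha) as [phi [Hphi [h Hh]]].
      exists (phi r). split.
      + apply in_flat_map. exists r. split; auto. apply in_map with (f := fun phi => phi r); auto.
      + rewrite <- Har, Hh. rewrite hom_conj by (apply Hl; auto).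
        exists (ginv (phi h)). apply conj_inv. }
  split.
  - exists 1. split; [lia|]. intro n.
    pose proof (Hac n).
    pose proof (count_mono G (conjugate G) (@conj_refl G) (@conj_sym G) (@conj_trans G) T n (1 * n + 1) ltac:(lia)).
    unfold conjugacy_growth in *. lia.
  - exists (S (length l)). split; [lia|]. intro n.
    pose proof (Hca n).
    pose proof (count_mono G (aut_equiv G) (@aut_refl G) (@aut_sym G) (@aut_trans G) T n (S (length l) * n + S (length l)) ltac:(lia)).
    unfold automorphic_growth in *. nia.
Qed.
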